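(* Let $T_l$ be a $2m$ deck-shuffler IET. Then $H_l$ is non-decreasing and has only finitely many plateaus, i.e. there are only finitely many $z\in[0,1)$ for which $H_l^{-1}(\{z\})$ is an interval of positive length.
   Context: A $2m$ deck-shuffler IET $T_l$ is the map $[0,1)\to[0,1)$ determined by a length vector $l$ giving a partition of $[0,1)$ into consecutive left-closed right-open intervals $A_1<\dots<A_m<B_1<\dots<B_m$ of positive lengths, with $T_l(x)=x+|B_1|+\dots+|B_i|$ for $x\in A_i$ and $T_l(x)=x-|A_i|-\dots-|A_m|$ for $x\in B_i$. $B=B_1\cup\dots\cup B_m$ and $H_l(x)=\sum_{n=0}^\infty \chi_B(T_l^n x)/2^{n+1}$. *)

(* Defs.v *)
From Stdlib Require Import Reals ClassicalEpsilon.
From Coquelicot Require Import Coquelicot.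
Open Scope R_scope.

Fixpoint rsum (f : nat -> R) (n : nat) : R :=
  match n with
  | O => 0
  | S k => rsum f k + f k
  end.

(* A length vector for a 2m deck shuffler: a i = |A_(i+1)|, b i = |B_(i+1)|
   for i = 0 .. m-1 (0-indexed). *)
Definition length_vector (m : nat) (a b : nat -> R) : Prop :=
  (1 <= m)%nat /\
  (forall i, (i < m)%nat -> 0 < a i) /\
  (forall i, (i < m)%nat -> 0 < b i) /\
  rsum a m + rsum b m = 1.

Definition leftA (a : nat -> R) (i : nat) : R := rsum a i.
Definition leftB (m : nat) (a b : nat -> R) (i : nat) : R := rsum a m + rsum b i.

Definition inA (a : nat -> R) (i : nat) (x : R) : Prop :=
  leftA a i <= x < leftA a i + a i.
Definition inB (m : nat) (a b : nat -> R) (i : nat) (x : R) : Prop :=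
  leftB m a b i <= x < leftB m a b i + b i.

Definition ind (P : Prop) : R := if excluded_middle_informative P then 1 else 0.

(* T_l(x) = x + |B_1|+...+|B_i| on A_i, x - (|A_i|+...+|A_m|) on B_i
   (0-indexed: + rsum b (i+1) on A_i, - (rsum a m - rsum a i) on B_i).
   The intervals are disjoint, so at most one summand is nonzero;
   outside [0,1) T is the identity (irrelevant). *)
Definition T (m : nat) (a b : nat -> R) (x : R) : R :=
  x + rsum (fun i => ind (inA a i x) * rsum b (S i)) m
    - rsum (fun i => ind (inB m a b i x) * (rsum a m - rsum a i)) m.

Definition chiB (m : nat) (a b : nat -> R) (x : R) : R :=
  ind (exists i, (i < m)%nat /\ inB m a b i x).

Definition H (m : nat) (a b : nat -> R) (x : R) : R :=
  Series (fun n => chiB m a b (Nat.iter n (T m a b) x) / 2 ^ (S n)).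

Definition level_set (m : nat) (a b : nat -> R) (z : R) (x : R) : Prop :=
  0 <= x < 1 /\ H m a b x = z.

Definition pos_length_interval (S : R -> Prop) : Prop :=
  (forall x y t, S x -> S y -> x <= t <= y -> S t) /\
  (exists x y, S x /\ S y /\ x < y).

(* Main.v *)
Require Import Defs.
From Stdlib Require Import Reals List.
From Coquelicot Require Import Coquelicot.
Open Scope R_scope.
From Stdlib Require Import Lra Lia Classical ClassicalEpsilon ZArith.
Import Defs.
Open Scope R_scope.

Lemma ind_T (P : Prop) : P -> ind P = 1.
Proof. intros H; unfold ind; destruct (excluded_middle_informative P); tauto. Qed.
Lemma ind_F (P : Prop) : ~ P -> ind P = 0.
Proof. intros H; unfold ind; destruct (excluded_middle_informative P); tauto. Qed.

Lemma rsum_mono (f : nat -> R) (n : nat) : (forall i, (i < n)%nat -> 0 < f i) ->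
  forall i j, (i <= j <= n)%nat -> rsum f i <= rsum f j.
Proof.
  intros Hf i j [Hij Hjn]. induction j as [|j IH].
  - assert (i = 0)%nat by lia. subst; lra.
  - destruct (Nat.eq_dec i (S j)) as [->|Hne]; [lra|].
    simpl. assert (0 < f j) by (apply Hf; lia). specialize (IH ltac:(lia) ltac:(lia)). lra.
Qed.

Lemma rsum_smono (f : nat -> R) (n : nat) : (forall i, (i < n)%nat -> 0 < f i) ->
  forall i j, (i < j <= n)%nat -> rsum f i + f i <= rsum f j.
Proof.
  intros Hf i j H. change (rsum f (S i) <= rsum f j). apply (rsum_mono f n Hf). lia.
Qed.

Lemma rsum_ind_one (P : nat -> Prop) (c : nat -> R) n i :
  (i < n)%nat -> (forall j, (j < n)%nat -> (P j <-> j = i)) ->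
  rsum (fun j => ind (P j) * c j) n = c i.
Proof.
  intros Hi HP. induction n as [|n IH]; [lia|]. simpl.
  destruct (Nat.eq_dec i n) as [->|Hne].
  - assert (Hz : forall k, (k <= n)%nat -> rsum (fun j => ind (P j) * c j) k = 0).
    { induction k as [|k IHk]; intros Hk; simpl; [lra|].
      rewrite IHk by lia. rewrite ind_F; [lra|]. intros Hp. apply HP in Hp; lia. }
    rewrite Hz by lia. rewrite ind_T; [lra|]. apply HP; lia.
  - rewrite IH by (try lia; intros j Hj; apply HP; lia).
    rewrite ind_F; [lra|]. intros Hp. apply HP in Hp; lia.
Qed.

Lemma rsum_ind_zero (P : nat -> Prop) (c : nat -> R) n :
  (forall j, (j < n)%nat -> ~ P j) -> rsum (fun j => ind (P j) * c j) n = 0.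
Proof.
  intros HP. induction n as [|n IH]; simpl; [lra|].
  rewrite IH by (intros; apply HP; lia). rewrite ind_F by (apply HP; lia). lra.
Qed.

Definition X (t : R) : Prop := 0 <= t < 1.


Definition alpha (m : nat) (a : nat -> R) := rsum a m.

Lemma lv_a m a b : length_vector m a b -> forall i, (i < m)%nat -> 0 < a i.
Proof. intros (_&H&_); exact H. Qed.
Lemma lv_b m a b : length_vector m a b -> forall i, (i < m)%nat -> 0 < b i.
Proof. intros (_&_&H&_); exact H. Qed.
Lemma lv_sum m a b : length_vector m a b -> rsum a m + rsum b m = 1.
Proof. intros (_&_&_&H); exact H. Qed.

Lemma rsum_nonneg (f : nat -> R) n : (forall i, (i < n)%nat -> 0 < f i) ->
  forall k, (k <= n)%nat -> 0 <= rsum f k.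
Proof. intros Hf k Hk. change 0 with (rsum f 0). apply (rsum_mono f n Hf); lia. Qed.

Lemma inA_lt m a b i x : length_vector m a b -> (i < m)%nat -> inA a i x -> x < rsum a m.
Proof.
  intros hl Hi [H1 H2]. unfold leftA in *.
  pose proof (rsum_smono a m (lv_a _ _ _ hl) i m ltac:(lia)). lra.
Qed.

Lemma inB_ge m a b i x : length_vector m a b -> (i < m)%nat -> inB m a b i x -> rsum a m <= x.
Proof.
  intros hl Hi [H1 H2]. unfold leftB in *.
  pose proof (rsum_nonneg b m (lv_b _ _ _ hl) i ltac:(lia)). lra.
Qed.

Lemma inA_uniq m a b i j x : length_vector m a b -> (i < m)%nat -> (j < m)%nat ->
  inA a i x -> inA a j x -> i = j.
Proof.
  intros hl Hi Hj [H1 H2] [H3 H4]. unfold leftA in *.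
  destruct (Nat.lt_trichotomy i j) as [Hl|[He|Hl]]; auto.
  - pose proof (rsum_smono a m (lv_a _ _ _ hl) i j ltac:(lia)). lra.
  - pose proof (rsum_smono a m (lv_a _ _ _ hl) j i ltac:(lia)). lra.
Qed.

Lemma inB_uniq m a b i j x : length_vector m a b -> (i < m)%nat -> (j < m)%nat ->
  inB m a b i x -> inB m a b j x -> i = j.
Proof.
  intros hl Hi Hj [H1 H2] [H3 H4]. unfold leftB in *.
  destruct (Nat.lt_trichotomy i j) as [Hl|[He|Hl]]; auto.
  - pose proof (rsum_smono b m (lv_b _ _ _ hl) i j ltac:(lia)). lra.
  - pose proof (rsum_smono b m (lv_b _ _ _ hl) j i ltac:(lia)). lra.
Qed.

Lemma TA m a b i x : length_vector m a b -> (i < m)%nat -> inA a i x ->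
  T m a b x = x + rsum b (S i).
Proof.
  intros hl Hi HA. unfold T.
  rewrite (rsum_ind_one (fun j => inA a j x) (fun j => rsum b (S j)) m i Hi).
  2:{ intros j Hj; split; [intros; eapply inA_uniq; eauto|intros ->; auto]. }
  rewrite rsum_ind_zero. lra.
  intros j Hj HB. pose proof (inA_lt _ _ _ _ _ hl Hi HA). pose proof (inB_ge _ _ _ _ _ hl Hj HB). lra.
Qed.

Lemma TB m a b i x : length_vector m a b -> (i < m)%nat -> inB m a b i x ->
  T m a b x = x - (rsum a m - rsum a i).
Proof.
  intros hl Hi HB. unfold T.
  rewrite (rsum_ind_one (fun j => inB m a b j x) (fun j => rsum a m - rsum a j) m i Hi).
  2:{ intros j Hj; split; [intros; eapply inB_uniq; eauto|intros ->; auto]. }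
  rewrite rsum_ind_zero. lra.
  intros j Hj HA. pose proof (inA_lt _ _ _ _ _ hl Hj HA). pose proof (inB_ge _ _ _ _ _ hl Hi HB). lra.
Qed.

Lemma exA m a b x : length_vector m a b -> 0 <= x < rsum a m -> exists i, (i < m)%nat /\ inA a i x.
Proof.
  intros hl. assert (forall k, (k <= m)%nat -> 0 <= x < rsum a k -> exists i, (i < k)%nat /\ inA a i x).
  { induction k as [|k IH]; intros Hk Hx; simpl in Hx; [lra|].
    destruct (Rlt_le_dec x (rsum a k)) as [Hl|Hl].
    - destruct (IH ltac:(lia) ltac:(lra)) as [i [Hi Hi2]]. exists i; split; auto.
    - exists k; split; [lia|]. unfold inA, leftA; lra. }
  intros; apply H; auto.
Qed.

Lemma exB m a b x : length_vector m a b -> rsum a m <= x < 1 -> exists i, (i < m)%nat /\ inB m a b i x.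
Proof.
  intros hl Hx. rewrite <- (lv_sum _ _ _ hl) in Hx.
  assert (forall k, (k <= m)%nat -> rsum a m <= x < rsum a m + rsum b k -> exists i, (i < k)%nat /\ inB m a b i x).
  { induction k as [|k IH]; intros Hk Hx'; simpl in Hx'; [lra|].
    destruct (Rlt_le_dec x (rsum a m + rsum b k)) as [Hl|Hl].
    - destruct (IH ltac:(lia) ltac:(lra)) as [i [Hi Hi2]]. exists i; split; auto.
    - exists k; split; [lia|]. unfold inB, leftB; lra. }
  apply H; auto.
Qed.

Definition chi m a b x := chiB m a b x.

Lemma chi_A m a b x : length_vector m a b -> x < rsum a m -> chiB m a b x = 0.
Proof.
  intros hl Hx. unfold chiB. apply ind_F. intros [i [Hi HB]].
  pose proof (inB_ge _ _ _ _ _ hl Hi HB). lra.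
Qed.

Lemma chi_B m a b x : length_vector m a b -> X x -> rsum a m <= x -> chiB m a b x = 1.
Proof.
  intros hl [H0 H1] Hx. unfold chiB. apply ind_T. apply exB; auto.
Qed.

Lemma chi_01 m a b x : chiB m a b x = 0 \/ chiB m a b x = 1.
Proof. unfold chiB, ind. destruct excluded_middle_informative; auto. Qed.

Lemma piece m a b x : length_vector m a b -> X x ->
  (exists i, (i < m)%nat /\ inA a i x) \/ (exists i, (i < m)%nat /\ inB m a b i x).
Proof.
  intros hl [H0 H1]. destruct (Rlt_le_dec x (rsum a m)).
  - left; eapply exA; eauto; lra.
  - right; apply exB; auto; lra.
Qed.

Lemma TrA m a b i x : length_vector m a b -> (i < m)%nat -> inA a i x ->
  rsum a i + rsum b (S i) <= T m a b x < rsum a (S i) + rsum b (S i).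
Proof. intros hl Hi H. rewrite (TA _ _ _ _ _ hl Hi H). destruct H as [H1 H2]; unfold leftA in *; simpl; lra. Qed.

Lemma TrB m a b i x : length_vector m a b -> (i < m)%nat -> inB m a b i x ->
  rsum a i + rsum b i <= T m a b x < rsum a i + rsum b (S i).
Proof. intros hl Hi H. rewrite (TB _ _ _ _ _ hl Hi H). destruct H as [H1 H2]; unfold leftB in *; simpl; lra. Qed.

Ltac monos hl i j :=
  let ma := constr:(rsum_mono _ _ (lv_a _ _ _ hl)) in
  let mb := constr:(rsum_mono _ _ (lv_b _ _ _ hl)) in
  idtac.

Lemma T_X m a b x : length_vector m a b -> X x -> X (T m a b x).
Proof.
  intros hl Hx. pose proof (lv_sum _ _ _ hl) as Hs.
  destruct (piece _ _ _ _ hl Hx) as [[i [Hi H]]|[i [Hi H]]].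
  - pose proof (TrA _ _ _ _ _ hl Hi H).
    pose proof (rsum_nonneg a m (lv_a _ _ _ hl) i ltac:(lia)).
    pose proof (rsum_nonneg b m (lv_b _ _ _ hl) (S i) ltac:(lia)).
    pose proof (rsum_mono a m (lv_a _ _ _ hl) (S i) m ltac:(lia)).
    pose proof (rsum_mono b m (lv_b _ _ _ hl) (S i) m ltac:(lia)).
    unfold X; lra.
  - pose proof (TrB _ _ _ _ _ hl Hi H).
    pose proof (rsum_nonneg a m (lv_a _ _ _ hl) i ltac:(lia)).
    pose proof (rsum_nonneg b m (lv_b _ _ _ hl) i ltac:(lia)).
    pose proof (rsum_mono a m (lv_a _ _ _ hl) i m ltac:(lia)).
    pose proof (rsum_mono b m (lv_b _ _ _ hl) (S i) m ltac:(lia)).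
    unfold X; lra.
Qed.

Lemma Titer_X m a b n x : length_vector m a b -> X x -> X (Nat.iter n (T m a b) x).
Proof. intros hl Hx; induction n; simpl; auto. apply T_X; auto. Qed.

Lemma disp_sign m a b x : length_vector m a b -> X x ->
  (x < rsum a m -> T m a b x - x > 0) /\ (rsum a m <= x -> T m a b x - x < 0).
Proof.
  intros hl Hx. destruct (piece _ _ _ _ hl Hx) as [[i [Hi H]]|[i [Hi H]]].
  - pose proof (inA_lt _ _ _ _ _ hl Hi H). rewrite (TA _ _ _ _ _ hl Hi H).
    pose proof (rsum_smono b m (lv_b _ _ _ hl) 0 (S i) ltac:(lia)).
    pose proof (lv_b _ _ _ hl 0 ltac:(lia)). simpl in *. split; intros; lra.
  - pose proof (inB_ge _ _ _ _ _ hl Hi H). rewrite (TB _ _ _ _ _ hl Hi H).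
    pose proof (rsum_smono a m (lv_a _ _ _ hl) i m ltac:(lia)).
    pose proof (lv_a _ _ _ hl i Hi). split; intros; lra.
Qed.

Lemma chi_disp m a b s t : length_vector m a b -> X s -> X t ->
  T m a b s - s = T m a b t - t -> chiB m a b s = chiB m a b t.
Proof.
  intros hl Hs Ht He. destruct (disp_sign _ _ _ _ hl Hs) as [s1 s2].
  destruct (disp_sign _ _ _ _ hl Ht) as [t1 t2].
  destruct (Rlt_le_dec s (rsum a m)); destruct (Rlt_le_dec t (rsum a m)).
  - rewrite !chi_A; auto.
  - specialize (s1 r); specialize (t2 r0); lra.
  - specialize (s2 r); specialize (t1 r0); lra.
  - rewrite !chi_B; auto.
Qed.

Lemma chi_mono m a b s t : length_vector m a b -> X s -> X t -> s <= t ->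
  chiB m a b s <= chiB m a b t.
Proof.
  intros hl Hs Ht Hst. destruct (Rlt_le_dec s (rsum a m)).
  - rewrite (chi_A _ _ _ s hl r). destruct (chi_01 m a b t) as [-> | ->]; lra.
  - rewrite !chi_B; auto; lra.
Qed.

Lemma T_inj m a b x y : length_vector m a b -> X x -> X y -> T m a b x = T m a b y -> x = y.
Proof.
  intros hl Hx Hy He.
  pose proof (rsum_mono a m (lv_a _ _ _ hl)) as ma.
  pose proof (rsum_mono b m (lv_b _ _ _ hl)) as mb.
  destruct (piece _ _ _ _ hl Hx) as [[i [Hi H]]|[i [Hi H]]];
  destruct (piece _ _ _ _ hl Hy) as [[j [Hj H']]|[j [Hj H']]].
  - destruct (Nat.lt_trichotomy i j) as [Hl|[->|Hl]].
    + pose proof (TrA _ _ _ _ _ hl Hi H); pose proof (TrA _ _ _ _ _ hl Hj H').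
      pose proof (ma (S i) j ltac:(lia)); pose proof (mb (S i) (S j) ltac:(lia)). lra.
    + rewrite (TA _ _ _ _ _ hl Hi H), (TA _ _ _ _ _ hl Hj H') in He. lra.
    + pose proof (TrA _ _ _ _ _ hl Hi H); pose proof (TrA _ _ _ _ _ hl Hj H').
      pose proof (ma (S j) i ltac:(lia)); pose proof (mb (S j) (S i) ltac:(lia)). lra.
  - pose proof (TrA _ _ _ _ _ hl Hi H); pose proof (TrB _ _ _ _ _ hl Hj H').
    destruct (Nat.lt_ge_cases i j).
    + pose proof (ma (S i) j ltac:(lia)); pose proof (mb (S i) j ltac:(lia)). lra.
    + pose proof (ma j i ltac:(lia)); pose proof (mb (S j) (S i) ltac:(lia)). lra.
  - pose proof (TrB _ _ _ _ _ hl Hi H); pose proof (TrA _ _ _ _ _ hl Hj H').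
    destruct (Nat.lt_ge_cases j i).
    + pose proof (ma (S j) i ltac:(lia)); pose proof (mb (S j) i ltac:(lia)). lra.
    + pose proof (ma i j ltac:(lia)); pose proof (mb (S i) (S j) ltac:(lia)). lra.
  - destruct (Nat.lt_trichotomy i j) as [Hl|[->|Hl]].
    + pose proof (TrB _ _ _ _ _ hl Hi H); pose proof (TrB _ _ _ _ _ hl Hj H').
      pose proof (ma i j ltac:(lia)); pose proof (mb (S i) j ltac:(lia)). lra.
    + rewrite (TB _ _ _ _ _ hl Hi H), (TB _ _ _ _ _ hl Hj H') in He. lra.
    + pose proof (TrB _ _ _ _ _ hl Hi H); pose proof (TrB _ _ _ _ _ hl Hj H').
      pose proof (ma j i ltac:(lia)); pose proof (mb (S j) i ltac:(lia)). lra.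
Qed.

Lemma T_exp m a b x y : length_vector m a b -> X x -> X y -> x <= y ->
  chiB m a b x = chiB m a b y -> y - x <= T m a b y - T m a b x.
Proof.
  intros hl Hx Hy Hxy Hc.
  pose proof (rsum_mono a m (lv_a _ _ _ hl)) as ma.
  pose proof (rsum_mono b m (lv_b _ _ _ hl)) as mb.
  destruct (piece _ _ _ _ hl Hx) as [[i [Hi H]]|[i [Hi H]]];
  destruct (piece _ _ _ _ hl Hy) as [[j [Hj H']]|[j [Hj H']]].
  - rewrite (TA _ _ _ _ _ hl Hi H), (TA _ _ _ _ _ hl Hj H').
    destruct (Nat.lt_ge_cases j i).
    + destruct H as [H1 H2], H' as [H3 H4]; unfold leftA in *.
      pose proof (rsum_smono a m (lv_a _ _ _ hl) j i ltac:(lia)). lra.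
    + pose proof (mb (S i) (S j) ltac:(lia)). lra.
  - pose proof (inA_lt _ _ _ _ _ hl Hi H). pose proof (inB_ge _ _ _ _ _ hl Hj H').
    rewrite (chi_A _ _ _ _ hl H0), (chi_B _ _ _ _ hl Hy H1) in Hc. lra.
  - pose proof (inB_ge _ _ _ _ _ hl Hi H). pose proof (inA_lt _ _ _ _ _ hl Hj H'). lra.
  - rewrite (TB _ _ _ _ _ hl Hi H), (TB _ _ _ _ _ hl Hj H').
    destruct (Nat.lt_ge_cases j i).
    + destruct H as [H1 H2], H' as [H3 H4]; unfold leftB in *.
      pose proof (rsum_smono b m (lv_b _ _ _ hl) j i ltac:(lia)). lra.
    + pose proof (ma i j ltac:(lia)). lra.
Qed.

Lemma RC m a b t : length_vector m a b -> X t ->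
  exists eps, eps > 0 /\ forall s, t <= s < t + eps -> X s /\ T m a b s - s = T m a b t - t.
Proof.
  intros hl Ht. destruct (piece _ _ _ _ hl Ht) as [[i [Hi H]]|[i [Hi H]]].
  - exists (leftA a i + a i - t). destruct H as [H1 H2]. split; [lra|].
    intros s Hs. assert (Hs' : inA a i s) by (split; lra).
    pose proof (inA_lt _ _ _ _ _ hl Hi Hs'). destruct Ht.
    pose proof (lv_sum _ _ _ hl). pose proof (rsum_nonneg b m (lv_b _ _ _ hl) m ltac:(lia)).
    split; [split; lra|].
    rewrite (TA _ _ _ _ _ hl Hi Hs'), (TA _ _ _ _ _ hl Hi (conj H1 H2)). lra.
  - exists (leftB m a b i + b i - t). destruct H as [H1 H2]. split; [lra|].
    intros s Hs. assert (Hs' : inB m a b i s) by (split; lra).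
    pose proof (inB_ge _ _ _ _ _ hl Hi Hs'). destruct Ht.
    pose proof (rsum_smono b m (lv_b _ _ _ hl) i m ltac:(lia)).
    pose proof (lv_sum _ _ _ hl). unfold leftB in *.
    split; [split; lra|].
    rewrite (TB _ _ _ _ _ hl Hi Hs'), (TB _ _ _ _ _ hl Hi (conj H1 H2)). lra.
Qed.

Definition notD m a b t := forall i, (i < m)%nat -> t <> leftA a i /\ t <> leftB m a b i.

Lemma LC m a b t : length_vector m a b -> X t -> notD m a b t ->
  exists eps, eps > 0 /\ forall s, t - eps < s <= t -> X s /\ T m a b s - s = T m a b t - t.
Proof.
  intros hl Ht HD. destruct (piece _ _ _ _ hl Ht) as [[i [Hi H]]|[i [Hi H]]].
  - destruct (HD i Hi) as [Hn _].
    exists (t - leftA a i). destruct H as [H1 H2]. split; [lra|].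
    intros s Hs. assert (Hs' : inA a i s) by (split; lra).
    pose proof (rsum_nonneg a m (lv_a _ _ _ hl) i ltac:(lia)). unfold leftA in *. destruct Ht.
    split; [split; lra|].
    rewrite (TA _ _ _ _ _ hl Hi Hs'), (TA _ _ _ _ _ hl Hi (conj H1 H2)). lra.
  - destruct (HD i Hi) as [_ Hn].
    exists (t - leftB m a b i). destruct H as [H1 H2]. split; [lra|].
    intros s Hs. assert (Hs' : inB m a b i s) by (split; lra).
    pose proof (inB_ge _ _ _ _ _ hl Hi (conj H1 H2)). destruct Ht.
    pose proof (rsum_nonneg a m (lv_a _ _ _ hl) m ltac:(lia)). unfold leftB in *.
    pose proof (rsum_nonneg b m (lv_b _ _ _ hl) i ltac:(lia)).
    split; [split; lra|].
    rewrite (TB _ _ _ _ _ hl Hi Hs'), (TB _ _ _ _ _ hl Hi (conj H1 H2)). lra.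
Qed.

Definition It m a b n x := Nat.iter n (T m a b) x.
Definition sm m a b x y := forall n, chiB m a b (It m a b n x) = chiB m a b (It m a b n y).

Lemma It_S m a b n x : It m a b (S n) x = T m a b (It m a b n x).
Proof. reflexivity. Qed.
Lemma It_Sr m a b n x : It m a b (S n) x = It m a b n (T m a b x).
Proof. unfold It. rewrite Nat.iter_succ_r. reflexivity. Qed.
Lemma It_add m a b n k x : It m a b (n + k) x = It m a b n (It m a b k x).
Proof. unfold It. apply Nat.iter_add. Qed.
Lemma It_X m a b n x : length_vector m a b -> X x -> X (It m a b n x).
Proof. intros; apply Titer_X; auto. Qed.

Lemma sm_refl m a b x : sm m a b x x.
Proof. intros n; reflexivity. Qed.
Lemma sm_sym m a b x y : sm m a b x y -> sm m a b y x.
Proof. intros H n; symmetry; apply H. Qed.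
Lemma sm_trans m a b x y z : sm m a b x y -> sm m a b y z -> sm m a b x z.
Proof. intros H1 H2 n; rewrite H1; apply H2. Qed.
Lemma sm_It m a b k x y : sm m a b x y -> sm m a b (It m a b k x) (It m a b k y).
Proof. intros H n. rewrite <- !It_add. apply H. Qed.
Lemma sm_T m a b x y : sm m a b x y -> sm m a b (T m a b x) (T m a b y).
Proof. intros H. apply (sm_It m a b 1 x y H). Qed.

Lemma iter_exp m a b x y : length_vector m a b -> X x -> X y -> x <= y ->
  forall n, (forall k, (k < n)%nat -> chiB m a b (It m a b k x) = chiB m a b (It m a b k y)) ->
  y - x <= It m a b n y - It m a b n x.
Proof.
  intros hl Hx Hy Hxy n. induction n as [|n IH]; intros Hk; [simpl; lra|].
  rewrite !It_S. specialize (IH (fun k Hk' => Hk k ltac:(lia))).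
  pose proof (T_exp m a b (It m a b n x) (It m a b n y) hl (It_X _ _ _ _ _ hl Hx) (It_X _ _ _ _ _ hl Hy)
     ltac:(lra) (Hk n ltac:(lia))). lra.
Qed.

Lemma sm_exp m a b x y : length_vector m a b -> X x -> X y -> x <= y -> sm m a b x y ->
  forall n, y - x <= It m a b n y - It m a b n x.
Proof. intros hl Hx Hy Hxy H n. apply iter_exp; auto. Qed.

Lemma conv m a b s t u : length_vector m a b -> X s -> X u -> s <= t <= u -> sm m a b s u ->
  sm m a b s t.
Proof.
  intros hl Hs Hu Ht H.
  assert (Xt : X t) by (destruct Hs, Hu; split; lra).
  assert (Hc : forall n, It m a b n s <= It m a b n t <= It m a b n u ->
     chiB m a b (It m a b n s) = chiB m a b (It m a b n t) /\
     chiB m a b (It m a b n t) = chiB m a b (It m a b n u)).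
  { intros n Hn. pose proof (chi_mono m a b _ _ hl (It_X _ _ _ n _ hl Hs) (It_X _ _ _ n _ hl Xt) (proj1 Hn)).
    pose proof (chi_mono m a b _ _ hl (It_X _ _ _ n _ hl Xt) (It_X _ _ _ n _ hl Hu) (proj2 Hn)).
    specialize (H n). destruct (chi_01 m a b (It m a b n s)); destruct (chi_01 m a b (It m a b n t)); lra. }
  assert (Ho : forall n, It m a b n s <= It m a b n t <= It m a b n u).
  { induction n as [|n IH]; [simpl; lra|]. rewrite !It_S. destruct (Hc n IH) as [c1 c2].
    pose proof (T_exp m a b _ _ hl (It_X _ _ _ n _ hl Hs) (It_X _ _ _ n _ hl Xt) (proj1 IH) c1).
    pose proof (T_exp m a b _ _ hl (It_X _ _ _ n _ hl Xt) (It_X _ _ _ n _ hl Hu) (proj2 IH) c2). lra. }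
  intros n. apply (Hc n (Ho n)).
Qed.

Lemma least_nat (P : nat -> Prop) : (exists n, P n) -> exists n, P n /\ forall k, (k < n)%nat -> ~ P k.
Proof.
  intros [n Hn]. revert Hn. induction n as [n IH] using (well_founded_induction Wf_nat.lt_wf). intros Hn.
  destruct (classic (exists k, (k < n)%nat /\ P k)) as [[k [Hk Pk]]|Hno].
  - apply (IH k Hk Pk).
  - exists n; split; auto. intros k Hk Pk; apply Hno; eauto.
Qed.

Lemma lexdiff m a b s t : length_vector m a b -> X s -> X t -> s <= t ->
  sm m a b s t \/ exists N, (forall k, (k < N)%nat -> chiB m a b (It m a b k s) = chiB m a b (It m a b k t))
     /\ chiB m a b (It m a b N s) = 0 /\ chiB m a b (It m a b N t) = 1.
Proof.
  intros hl Hs Ht Hst. destruct (classic (sm m a b s t)) as [H|H]; [left; auto|right].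
  apply not_all_ex_not in H. apply least_nat in H. destruct H as [N [HN Hk]].
  exists N. assert (Hk' : forall k, (k < N)%nat -> chiB m a b (It m a b k s) = chiB m a b (It m a b k t)).
  { intros k Hlt. apply NNPP. apply Hk; auto. }
  split; auto.
  pose proof (iter_exp m a b s t hl Hs Ht Hst N Hk').
  pose proof (chi_mono m a b (It m a b N s) (It m a b N t) hl (It_X _ _ _ _ _ hl Hs) (It_X _ _ _ _ _ hl Ht) ltac:(lra)).
  destruct (chi_01 m a b (It m a b N s)); destruct (chi_01 m a b (It m a b N t)); try lra; tauto.
Qed.

Definition w (n : nat) : R := / 2 ^ S n.

Arguments w : simpl never.
Lemma sumS e k : sum_f_R0 e (S k) = sum_f_R0 e k + e (S k).
Proof. reflexivity. Qed.

Lemma w_pos n : 0 < w n.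
Proof. unfold w. apply Rinv_0_lt_compat. apply pow_lt. lra. Qed.

Lemma w_S n : w (S n) = w n * / 2.
Proof. unfold w. change (2 ^ S (S n)) with (2 * 2 ^ S n). rewrite Rinv_mult. ring. Qed.

Lemma geom_w n : (/ 2) ^ n = 2 * w n.
Proof. unfold w. rewrite pow_inv. change (2 ^ S n) with (2 * 2 ^ n). rewrite Rinv_mult.
  field. apply pow_nonzero. lra. Qed.

Lemma ex_ser01 (f : nat -> R) : (forall n, f n = 0 \/ f n = 1) -> ex_series (fun n => f n / 2 ^ S n).
Proof.
  intros Hf. apply (ex_series_le (V := R_CompleteNormedModule) _ (fun n => (/2) ^ n)).
  - intros n. change (norm (f n / 2 ^ S n)) with (Rabs (f n * w n)). rewrite geom_w.
    pose proof (w_pos n). destruct (Hf n) as [-> | ->]; rewrite ?Rmult_0_l, ?Rmult_1_l;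
    rewrite ?Rabs_R0, ?Rabs_right; lra.
  - apply ex_series_geom. rewrite Rabs_right; lra.
Qed.

Lemma isum_ge (e : nat -> R) L c n0 : infinite_sum e L ->
  (forall n, (n0 <= n)%nat -> c <= sum_f_R0 e n) -> c <= L.
Proof.
  intros HL Hn. destruct (Rle_lt_dec c L) as [|Hlt]; auto.
  destruct (HL (c - L) ltac:(lra)) as [N HN].
  specialize (HN (Nat.max N n0) ltac:(lia)). specialize (Hn (Nat.max N n0) ltac:(lia)).
  unfold Rdist in HN. apply Rabs_def2 in HN. lra.
Qed.

Lemma Scmp (f g : nat -> R) N :
  (forall n, f n = 0 \/ f n = 1) -> (forall n, g n = 0 \/ g n = 1) ->
  (forall k, (k < N)%nat -> f k = g k) -> g N = 0 -> f N = 1 ->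
  Series (fun n => g n / 2 ^ S n) <= Series (fun n => f n / 2 ^ S n) /\
  forall k, (N < k)%nat -> (f k - g k + 1) * w k <=
     Series (fun n => f n / 2 ^ S n) - Series (fun n => g n / 2 ^ S n).
Proof.
  intros Hf Hg Hfg HgN HfN.
  set (e := fun n => (f n - g n) * w n).
  assert (He : Series (fun n => f n / 2 ^ S n) - Series (fun n => g n / 2 ^ S n) = Series e).
  { rewrite <- Series_minus by (apply ex_ser01; auto). apply Series_ext. intros n.
    unfold e, Rdiv, w. ring. }
  assert (Hex : ex_series e).
  { assert (Hfe : forall n, plus (f n / 2 ^ S n) (opp (g n / 2 ^ S n)) = e n).
    { intros n. unfold e, Rdiv, w. change (f n * / 2 ^ S n + - (g n * / 2 ^ S n) = (f n - g n) * / 2 ^ S n). ring. }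
    apply (ex_series_ext _ _ Hfe).
    apply (ex_series_plus (V := R_NormedModule)); [apply ex_ser01; auto|].
      apply (ex_series_opp (V := R_NormedModule)). apply ex_ser01; auto. }
  pose proof (Series_correct e Hex) as Hs. apply is_series_Reals in Hs.
  rewrite He. set (L := Series e) in *.
  assert (Hlow : forall n, -1 <= f n - g n) by (intros n; destruct (Hf n), (Hg n); lra).
  assert (Hz : forall n, (n < N)%nat -> sum_f_R0 e n = 0).
  { induction n as [|n IH]; intros Hn; simpl.
    - unfold e. rewrite Hfg by lia. ring.
    - rewrite IH by lia. unfold e. rewrite Hfg by lia. ring. }
  assert (HN0 : sum_f_R0 e N = w N).
  { destruct N as [|N]; simpl.
    - unfold e; rewrite HfN, HgN. ring.
    - rewrite Hz by lia. unfold e; rewrite HfN, HgN. ring. }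
  assert (L1 : forall j, w (N + j) <= sum_f_R0 e (N + j)).
  { induction j as [|j IH]. - rewrite Nat.add_0_r, HN0; lra.
    - rewrite <- plus_n_Sm. rewrite sumS. unfold e at 2. rewrite w_S. pose proof (w_pos (N + j)).
      pose proof (Hlow (S (N + j))).
      assert (-1 * (w (N + j) * / 2) <= (f (S (N + j)) - g (S (N + j))) * (w (N + j) * / 2)).
      { apply Rmult_le_compat_r; [|lra]. pose proof (w_pos (N+j)); lra. }
      lra. }
  assert (H0 : 0 <= L).
  { apply (isum_ge e L 0 N Hs). intros n Hn. replace n with (N + (n - N))%nat by lia.
    pose proof (L1 (n - N)%nat). pose proof (w_pos (N + (n - N))). lra. }
  split.
  - lra.
  - intros k Hk. apply (isum_ge e L _ k Hs). intros n Hn.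
    replace n with (k + (n - k))%nat by lia. generalize (n - k)%nat; intros j.
    assert (Hh : 0 <= (f k - g k + 1) * w k).
    { apply Rmult_le_pos; [pose proof (Hlow k); lra|pose proof (w_pos k); lra]. }
    assert (forall j, w (k + j) + (f k - g k + 1) * w k <= sum_f_R0 e (k + j)).
    { induction j0 as [|j0 IH].
      - rewrite Nat.add_0_r. destruct k as [|k]; [lia|]. rewrite sumS. unfold e at 2.
        pose proof (L1 (k - N)%nat). replace (N + (k - N))%nat with k in H by lia.
        rewrite w_S in *. lra.
      - rewrite <- plus_n_Sm. rewrite sumS. unfold e at 2. rewrite w_S. pose proof (w_pos (k + j0)).
        pose proof (Hlow (S (k + j0))).
        assert (-1 * (w (k + j0) * / 2) <= (f (S (k + j0)) - g (S (k + j0))) * (w (k + j0) * / 2)).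
        { apply Rmult_le_compat_r; [|lra]. pose proof (w_pos (k+j0)); lra. }
        lra. }
    specialize (H j). pose proof (w_pos (k + j)). lra.
Qed.

Lemma H_eq m a b x : H m a b x = Series (fun n => chiB m a b (It m a b n x) / 2 ^ S n).
Proof. reflexivity. Qed.

Lemma H_sm m a b x y : sm m a b x y -> H m a b x = H m a b y.
Proof. intros Hs. rewrite !H_eq. apply Series_ext. intros n; rewrite Hs; reflexivity. Qed.

Lemma H_mono m a b x y : length_vector m a b -> X x -> X y -> x <= y -> H m a b x <= H m a b y.
Proof.
  intros hl Hx Hy Hxy. destruct (lexdiff m a b x y hl Hx Hy Hxy) as [Hs|[N [Hk [H1 H2]]]].
  - rewrite (H_sm _ _ _ _ _ Hs); lra.
  - rewrite !H_eq. apply (Scmp (fun n => chiB m a b (It m a b n y)) (fun n => chiB m a b (It m a b n x)) N);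
      auto; intros; try apply chi_01. symmetry; auto.
Qed.

Lemma H_tight m a b x y : length_vector m a b -> X x -> X y -> x <= y -> H m a b x = H m a b y ->
  ~ sm m a b x y -> exists N, forall k, (N < k)%nat ->
     chiB m a b (It m a b k y) = 0 /\ chiB m a b (It m a b k x) = 1.
Proof.
  intros hl Hx Hy Hxy He Hn. destruct (lexdiff m a b x y hl Hx Hy Hxy) as [Hs|[N [Hk [H1 H2]]]]; [tauto|].
  exists N. intros k Hlt.
  destruct (Scmp (fun n => chiB m a b (It m a b n y)) (fun n => chiB m a b (It m a b n x)) N)
    as [_ Hc]; auto; try (intros; apply chi_01). { intros; symmetry; auto. }
  specialize (Hc k Hlt). rewrite <- !H_eq in Hc. rewrite He in Hc.
  pose proof (w_pos k).
  destruct (chi_01 m a b (It m a b k y)) as [E1|E1]; destruct (chi_01 m a b (It m a b k x)) as [E2|E2];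
    rewrite E1, E2 in Hc; try (split; auto; fail); nra.
Qed.

Lemma mid_sm m a b x t y : length_vector m a b -> X x -> X y -> x <= t <= y ->
  H m a b x = H m a b t -> H m a b t = H m a b y -> sm m a b x t \/ sm m a b t y.
Proof.
  intros hl Hx Hy Ht E1 E2. assert (Xt : X t) by (destruct Hx, Hy; split; lra).
  destruct (classic (sm m a b x t)) as [|N1]; [left; auto|].
  destruct (classic (sm m a b t y)) as [|N2]; [right; auto|].
  destruct (H_tight m a b x t hl Hx Xt ltac:(lra) E1 N1) as [K1 HK1].
  destruct (H_tight m a b t y hl Xt Hy ltac:(lra) E2 N2) as [K2 HK2].
  destruct (HK1 (S (K1 + K2)) ltac:(lia)) as [A1 _].
  destruct (HK2 (S (K1 + K2)) ltac:(lia)) as [_ A2]. lra.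
Qed.

Lemma It_RC m a b n t : length_vector m a b -> X t ->
  exists eps, eps > 0 /\ forall s, t <= s < t + eps -> X s /\ It m a b n s - s = It m a b n t - t.
Proof.
  intros hl Ht. induction n as [|n IH].
  - exists (1 - t). destruct Ht. split; [lra|]. intros s Hs. simpl. split; [split|]; lra.
  - destruct IH as [e1 [He1 H1]].
    destruct (RC m a b (It m a b n t) hl (It_X _ _ _ _ _ hl Ht)) as [e2 [He2 H2]].
    exists (Rmin e1 e2). split; [apply Rmin_pos; lra|]. intros s Hs.
    pose proof (Rmin_l e1 e2). pose proof (Rmin_r e1 e2).
    destruct (H1 s ltac:(lra)) as [Xs Es]. split; auto.
    rewrite !It_S. destruct (H2 (It m a b n s) ltac:(lra)) as [_ E2]. lra.
Qed.

Lemma chi_RC m a b n t : length_vector m a b -> X t ->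
  exists eps, eps > 0 /\ forall s, t <= s < t + eps -> X s /\
    chiB m a b (It m a b n s) = chiB m a b (It m a b n t).
Proof.
  intros hl Ht. destruct (It_RC m a b n t hl Ht) as [e1 [He1 H1]].
  destruct (It_RC m a b (S n) t hl Ht) as [e2 [He2 H2]].
  exists (Rmin e1 e2). split; [apply Rmin_pos; lra|]. intros s Hs.
  pose proof (Rmin_l e1 e2). pose proof (Rmin_r e1 e2).
  destruct (H1 s ltac:(lra)) as [Xs E1]. destruct (H2 s ltac:(lra)) as [_ E2].
  split; auto. apply chi_disp; auto; try apply It_X; auto. rewrite !It_S in E2. lra.
Qed.

Definition cls m a b t s := X s /\ sm m a b s t.
Definition ismin m a b t q := cls m a b t q /\ forall s, cls m a b t s -> q <= s.
Definition issup m a b t R := (forall s, cls m a b t s -> s <= R) /\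
  (forall r, r < R -> exists s, cls m a b t s /\ r < s).

Lemma cls_min m a b t : length_vector m a b -> X t -> exists q, ismin m a b t q.
Proof.
  intros hl Ht.
  destruct (completeness (fun r => cls m a b t (- r))) as [M0 [Hub Hl]].
  { exists 0. intros r [[Hr _] _]. lra. }
  { exists (- t). split; rewrite Ropp_involutive; [auto|apply sm_refl]. }
  assert (Hle : forall s, cls m a b t s -> - M0 <= s).
  { intros s Hs. assert (- s <= M0) by (apply Hub; rewrite Ropp_involutive; auto). lra. }
  assert (HM0 : M0 <= 0) by (apply Hl; intros r [[Hr _] _]; lra).
  assert (Ht' : - M0 <= t) by (apply Hle; split; [auto|apply sm_refl]).
  assert (Xq : X (- M0)) by (destruct Ht; split; lra).
  exists (- M0). split; [|auto]. split; auto.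
  intros n. destruct (chi_RC m a b n (- M0) hl Xq) as [e [He Hs]].
  destruct (classic (exists s, cls m a b t s /\ s < - M0 + e)) as [[s [Hcs Hlt]]|Hno].
  - destruct (Hs s) as [_ E]. { split; [apply Hle; auto|auto]. }
    rewrite <- E. apply (proj2 Hcs).
  - exfalso. assert (M0 <= M0 - e); [|lra]. apply Hl. intros r Hr.
    destruct (Rle_lt_dec r (M0 - e)) as [|Hlt]; auto. exfalso; apply Hno.
    exists (- r). split; auto. lra.
Qed.

Lemma cls_sup m a b t : length_vector m a b -> X t -> exists R, issup m a b t R.
Proof.
  intros hl Ht.
  destruct (completeness (fun s => cls m a b t s)) as [R [Hub Hl]].
  { exists 1. intros s [[_ Hs] _]. lra. }
  { exists t. split; [auto|apply sm_refl]. }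
  exists R. split; [exact Hub|]. intros r Hr.
  destruct (classic (exists s, cls m a b t s /\ r < s)) as [|Hno]; auto.
  exfalso. assert (R <= r); [|lra]. apply Hl. intros s Hs.
  destruct (Rle_lt_dec s r); auto. exfalso; apply Hno; eauto.
Qed.

Definition mn m a b t := epsilon (inhabits 0) (ismin m a b t).
Definition sp m a b t := epsilon (inhabits 0) (issup m a b t).

Lemma mn_spec m a b t : length_vector m a b -> X t -> ismin m a b t (mn m a b t).
Proof. intros hl Ht. unfold mn. apply epsilon_spec. apply cls_min; auto. Qed.
Lemma sp_spec m a b t : length_vector m a b -> X t -> issup m a b t (sp m a b t).
Proof. intros hl Ht. unfold sp. apply epsilon_spec. apply cls_sup; auto. Qed.

Lemma ismin_uniq m a b t q1 q2 : ismin m a b t q1 -> ismin m a b t q2 -> q1 = q2.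
Proof. intros [A1 B1] [A2 B2]. specialize (B1 _ A2). specialize (B2 _ A1). lra. Qed.

Lemma issup_uniq m a b t R1 R2 : issup m a b t R1 -> issup m a b t R2 -> R1 = R2.
Proof.
  intros [A1 B1] [A2 B2]. destruct (Rtotal_order R1 R2) as [Hl|[He|Hl]]; auto.
  - destruct (B2 R1 Hl) as [s [Hs Hr]]. specialize (A1 s Hs). lra.
  - destruct (B1 R2 Hl) as [s [Hs Hr]]. specialize (A2 s Hs). lra.
Qed.

Lemma cls_equiv m a b t t' s : sm m a b t t' -> (cls m a b t s <-> cls m a b t' s).
Proof.
  intros H. unfold cls. split; intros [A B]; split; auto.
  - eapply sm_trans; eauto. - eapply sm_trans; eauto. apply sm_sym; auto.
Qed.

Lemma mn_sm m a b t t' : length_vector m a b -> X t -> X t' -> sm m a b t t' -> mn m a b t = mn m a b t'.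
Proof.
  intros hl Ht Ht' H. apply (ismin_uniq m a b t).
  - apply mn_spec; auto.
  - destruct (mn_spec m a b t' hl Ht') as [A B]. split.
    + apply (cls_equiv m a b t t'); auto.
    + intros s Hs. apply B. apply (cls_equiv m a b t t'); auto.
Qed.

Lemma sp_sm m a b t t' : length_vector m a b -> X t -> X t' -> sm m a b t t' -> sp m a b t = sp m a b t'.
Proof.
  intros hl Ht Ht' H. apply (issup_uniq m a b t).
  - apply sp_spec; auto.
  - destruct (sp_spec m a b t' hl Ht') as [A B]. split.
    + intros s Hs. apply A. apply (cls_equiv m a b t t'); auto.
    + intros r Hr. destruct (B r Hr) as [s [Hs Hrs]]. exists s; split; auto.
      apply (cls_equiv m a b t t'); auto.
Qed.

Lemma cls_T m a b t s : length_vector m a b -> cls m a b t s -> cls m a b (T m a b t) (T m a b s).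
Proof. intros hl [Xs Hs]. split; [apply T_X; auto|apply sm_T; auto]. Qed.

Lemma cls_interval m a b t s : length_vector m a b -> X t ->
  mn m a b t <= s < sp m a b t -> cls m a b t s.
Proof.
  intros hl Ht Hs. destruct (mn_spec m a b t hl Ht) as [[Xq Sq] _].
  destruct (sp_spec m a b t hl Ht) as [_ B]. destruct (B s (proj2 Hs)) as [s' [[Xs' Ss'] Hlt]].
  assert (Xs : X s) by (destruct Xq, Xs'; split; lra).
  split; auto. apply sm_trans with (mn m a b t); auto.
  apply sm_sym. apply (conv m a b _ s s' hl Xq Xs' ltac:(lra)).
  apply sm_trans with t; auto. apply sm_sym; auto.
Qed.

Definition lam m a b t := sp m a b t - mn m a b t.

Lemma lam_mono m a b t : length_vector m a b -> X t -> lam m a b t <= lam m a b (T m a b t).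
Proof.
  intros hl Ht. unfold lam.
  assert (XTt : X (T m a b t)) by (apply T_X; auto).
  destruct (mn_spec m a b t hl Ht) as [[Xq Sq] Mq].
  destruct (sp_spec m a b t hl Ht) as [UR LR].
  destruct (mn_spec m a b _ hl XTt) as [_ Mq'].
  destruct (sp_spec m a b _ hl XTt) as [UR' _].
  set (q := mn m a b t) in *. set (R := sp m a b t) in *.
  set (q' := mn m a b (T m a b t)) in *. set (R' := sp m a b (T m a b t)) in *.
  assert (Hq' : q' <= T m a b q) by (apply Mq'; apply cls_T; auto; split; auto).
  assert (Hb : forall b0, cls m a b t b0 -> b0 <= q + (R' - q')).
  { intros b0 Hb0. pose proof (Mq b0 Hb0).
    assert (T m a b b0 <= R') by (apply UR'; apply cls_T; auto).
    destruct Hb0 as [Xb Sb].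
    pose proof (T_exp m a b q b0 hl Xq Xb H (eq_trans (Sq 0%nat) (eq_sym (Sb 0%nat)))).
    lra. }
  destruct (Rle_lt_dec R (q + (R' - q'))) as [|Hlt]; [lra|].
  destruct (LR _ Hlt) as [s [Hs Hr]]. specialize (Hb s Hs). lra.
Qed.

Lemma lam_eq m a b t : length_vector m a b -> X t -> lam m a b (T m a b t) <= lam m a b t ->
  T m a b (mn m a b t) = mn m a b (T m a b t) /\
  forall b0, cls m a b t b0 -> T m a b b0 - b0 = T m a b (mn m a b t) - mn m a b t.
Proof.
  intros hl Ht Hlam. unfold lam in Hlam.
  assert (XTt : X (T m a b t)) by (apply T_X; auto).
  destruct (mn_spec m a b t hl Ht) as [[Xq Sq] Mq].
  destruct (sp_spec m a b t hl Ht) as [UR LR].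
  destruct (mn_spec m a b _ hl XTt) as [_ Mq'].
  destruct (sp_spec m a b _ hl XTt) as [UR' _].
  set (q := mn m a b t) in *. set (R := sp m a b t) in *.
  set (q' := mn m a b (T m a b t)) in *. set (R' := sp m a b (T m a b t)) in *.
  assert (Hq' : q' <= T m a b q) by (apply Mq'; apply cls_T; auto; split; auto).
  assert (Hex : forall b0, cls m a b t b0 -> b0 - q <= T m a b b0 - T m a b q /\ T m a b b0 <= R').
  { intros b0 Hb0. pose proof (Mq b0 Hb0).
    assert (T m a b b0 <= R') by (apply UR'; apply cls_T; auto).
    destruct Hb0 as [Xb Sb].
    pose proof (T_exp m a b q b0 hl Xq Xb H (eq_trans (Sq 0%nat) (eq_sym (Sb 0%nat)))).
    split; lra. }
  assert (E1 : T m a b q = q').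
  { destruct (Rle_lt_dec (T m a b q) q') as [|Hlt]; [lra|]. exfalso.
    set (d := T m a b q - q').
    assert (Hb : forall b0, cls m a b t b0 -> b0 <= R - d).
    { intros b0 Hb0. destruct (Hex b0 Hb0). unfold d. lra. }
    destruct (LR (R - d) ltac:(unfold d; lra)) as [s [Hs Hr]]. specialize (Hb s Hs). lra. }
  split; auto.
  intros b0 Hb0. destruct (Hex b0 Hb0) as [E2 E3].
  destruct (Rle_lt_dec (T m a b b0 - b0) (T m a b q - q)) as [|Hlt]; [lra|]. exfalso.
  set (e := (T m a b b0 - b0) - (T m a b q - q)).
  assert (Hb : forall b1, cls m a b t b1 -> b1 <= R - e).
  { intros b1 Hb1. destruct (Rle_lt_dec b1 b0) as [|Hlt2].
    - unfold e. lra.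
    - destruct (Hex b1 Hb1) as [_ E4].
      destruct Hb0 as [Xb0 Sb0], Hb1 as [Xb1 Sb1].
      pose proof (T_exp m a b b0 b1 hl Xb0 Xb1 ltac:(lra)
        (eq_trans (Sb0 0%nat) (eq_sym (Sb1 0%nat)))).
      unfold e. lra. }
  destruct (LR (R - e) ltac:(unfold e; lra)) as [s [Hs Hr]]. specialize (Hb s Hs). lra.
Qed.

Lemma pigeon M (f : nat -> nat) : (forall n, (n <= M)%nat -> (f n < M)%nat) ->
  exists i j, (i < j <= M)%nat /\ f i = f j.
Proof.
  revert f. induction M as [|M IH]; intros f Hf.
  - specialize (Hf 0%nat ltac:(lia)). lia.
  - set (v := f (S M)).
    destruct (classic (exists i, (i <= M)%nat /\ f i = v)) as [[i [Hi Hv]]|Hno].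
    + exists i, (S M). split; [lia|auto].
    + set (g := fun n => if Nat.ltb (f n) v then f n else (f n - 1)%nat).
      destruct (IH g) as [i [j [Hij Hg]]].
      { intros n Hn. unfold g. pose proof (Hf n ltac:(lia)). pose proof (Hf (S M) ltac:(lia)).
        assert (f n <> v) by (intros E; apply Hno; eauto).
        fold v in H0. destruct (Nat.ltb_spec (f n) v); lia. }
      exists i, j. split; [lia|]. unfold g in Hg.
      assert (f i <> v) by (intros E; apply Hno; exists i; split; [lia|auto]).
      assert (f j <> v) by (intros E; apply Hno; exists j; split; [lia|auto]).
      destruct (Nat.ltb_spec (f i) v); destruct (Nat.ltb_spec (f j) v); lia.
Qed.

Lemma Int_part_nonneg r : 0 <= r -> (0 <= Int_part r)%Z.
Proof.
  intros Hr. destruct (base_Int_part r) as [A B].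
  assert (-1 < IZR (Int_part r)) by lra. apply lt_IZR in H. lia.
Qed.

Lemma sep_pigeon (l : R) (q : nat -> R) : 0 < l -> (forall n, X (q n)) ->
  exists i j, (i < j)%nat /\ Rabs (q i - q j) < l.
Proof.
  intros Hl Hq.
  destruct (archimed (1 / l)) as [A _].
  assert (Hpos : 0 < 1 / l) by (apply Rdiv_lt_0_compat; lra).
  assert (Hup : (0 <= up (1 / l))%Z) by (apply le_IZR; lra).
  set (M := Z.to_nat (up (1 / l))).
  assert (HM : INR M = IZR (up (1 / l))) by (unfold M; rewrite INR_IZR_INZ, Z2Nat.id; auto).
  set (bn := fun n => Z.to_nat (Int_part (q n / l))).
  assert (Hr : forall n, 0 <= q n / l < 1 / l).
  { intros n. destruct (Hq n). split.
    - apply Rdiv_le_0_compat; lra.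
    - unfold Rdiv. apply Rmult_lt_compat_r; [apply Rinv_0_lt_compat; lra|lra]. }
  assert (Hbn : forall n, INR (bn n) = IZR (Int_part (q n / l))).
  { intros n. unfold bn. rewrite INR_IZR_INZ, Z2Nat.id; auto. apply Int_part_nonneg. apply Hr. }
  destruct (pigeon M bn) as [i [j [Hij Hb]]].
  { intros n _. apply INR_lt. rewrite Hbn, HM. destruct (base_Int_part (q n / l)).
    specialize (Hr n). lra. }
  exists i, j. split; [lia|].
  assert (E : IZR (Int_part (q i / l)) = IZR (Int_part (q j / l))) by (rewrite <- !Hbn, Hb; auto).
  destruct (base_Int_part (q i / l)). destruct (base_Int_part (q j / l)).
  assert (Hd : Rabs (q i / l - q j / l) < 1) by (apply Rabs_def1; lra).
  replace (q i - q j) with (l * (q i / l - q j / l)) by (field; lra).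
  rewrite Rabs_mult, Rabs_right by lra. 
  assert (l * Rabs (q i / l - q j / l) < l * 1) by (apply Rmult_lt_compat_l; lra). lra.
Qed.

Lemma finite_eps (K : nat) (Q : nat -> R -> Prop) :
  (forall n e e', Q n e -> 0 < e' <= e -> Q n e') ->
  (forall n, (n < K)%nat -> exists e, e > 0 /\ Q n e) ->
  exists e, e > 0 /\ forall n, (n < K)%nat -> Q n e.
Proof.
  intros Hmono. induction K as [|K IH]; intros HK.
  - exists 1. split; [lra|]. intros; lia.
  - destruct IH as [e1 [He1 H1]]. { intros n Hn; apply HK; lia. }
    destruct (HK K ltac:(lia)) as [e2 [He2 H2]].
    exists (Rmin e1 e2). split; [apply Rmin_pos; lra|].
    pose proof (Rmin_l e1 e2). pose proof (Rmin_r e1 e2). pose proof (Rmin_pos e1 e2 He1 He2).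
    intros n Hn. destruct (Nat.eq_dec n K) as [->|Hne].
    + apply (Hmono K e2); [exact H2|]. split; lra.
    + apply (Hmono n e1); [apply H1; lia|lra].
Qed.

Lemma It_period m a b P d : It m a b P d = d -> forall q, It m a b (q * P) d = d.
Proof.
  intros HP q. induction q as [|q IH]; [reflexivity|].
  replace (S q * P)%nat with (P + q * P)%nat by lia. rewrite It_add, IH. auto.
Qed.

Lemma It_mod m a b P d : (P >= 1)%nat -> It m a b P d = d -> forall k, It m a b k d = It m a b (k mod P) d.
Proof.
  intros HP1 HP k. rewrite (Nat.div_mod_eq k P) at 1. rewrite Nat.add_comm, It_add.
  rewrite Nat.mul_comm, It_period; auto.
Qed.

Lemma plateau_main m a b x y : length_vector m a b -> X x -> X y -> x < y -> sm m a b x y ->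
  exists d P k, (exists i, (i < m)%nat /\ (d = leftA a i \/ d = leftB m a b i)) /\
    (P >= 1)%nat /\ It m a b P d = d /\ H m a b x = H m a b (It m a b k d).
Proof.
  intros hl Xx Xy Hxy Sxy.
  set (p := mn m a b x).
  destruct (mn_spec m a b x hl Xx) as [[Xp Sp] Mp]. fold p in Xp, Sp, Mp.
  assert (Hpx : p <= x) by (apply Mp; split; [auto|apply sm_refl]).
  assert (Sy : sm m a b p y) by (eapply sm_trans; eauto).
  set (l := y - p). assert (Hl : 0 < l) by (unfold l; lra).
  set (pn := fun n => It m a b n p). set (yn := fun n => It m a b n y).
  assert (Xpn : forall n, X (pn n)) by (intros; apply It_X; auto).
  assert (Xyn : forall n, X (yn n)) by (intros; apply It_X; auto).
  assert (gap : forall n, pn n + l <= yn n).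
  { intros n. pose proof (sm_exp m a b p y hl Xp Xy ltac:(lra) Sy n). unfold pn, yn, l. lra. }
  assert (Syn : forall n, sm m a b (yn n) (pn n)) by (intros n; apply sm_sym; apply sm_It; auto).
  assert (pnS : forall n, pn (S n) = T m a b (pn n)) by (intros; reflexivity).
  assert (Hsep : forall i j, pn i <= pn j -> ~ sm m a b (pn i) (pn j) -> pn i + l <= pn j).
  { intros i j Hle Hn. destruct (Rle_lt_dec (pn j) (yn i)) as [Hc|Hc].
    - exfalso. apply Hn. apply (conv m a b _ _ (yn i) hl (Xpn i) (Xyn i)). pose proof (gap i); lra.
      apply sm_sym; auto.
    - pose proof (gap i); lra. }
  assert (Hpig : exists i j, (i < j)%nat /\ sm m a b (pn i) (pn j)).
  { apply NNPP. intros Hno. destruct (sep_pigeon l pn Hl Xpn) as [i [j [Hij Habs]]].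
    assert (Hn1 : ~ sm m a b (pn i) (pn j)) by (intros Hs; apply Hno; eauto).
    destruct (Rle_lt_dec (pn i) (pn j)).
    - pose proof (Hsep i j r Hn1). rewrite Rabs_left1 in Habs; lra.
    - assert (Hn2 : ~ sm m a b (pn j) (pn i)) by (intros Hs; apply Hn1; apply sm_sym; auto).
      pose proof (Hsep j i ltac:(lra) Hn2). rewrite Rabs_right in Habs; lra. }
  destruct Hpig as [i0 [j0 [Hij Hs0]]].
  set (P := (j0 - i0)%nat). assert (HP : (P >= 1)%nat) by (unfold P; lia).
  assert (Hs1 : sm m a b (pn i0) (pn (i0 + P)%nat)) by (replace (i0 + P)%nat with j0 by (unfold P; lia); auto).
  assert (chain : forall dd k, lam m a b (pn k) <= lam m a b (pn (k + dd)%nat)).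
  { induction dd as [|dd IH]; intros k. - rewrite Nat.add_0_r; lra.
    - rewrite <- plus_n_Sm, pnS. pose proof (lam_mono m a b (pn (k + dd)%nat) hl (Xpn _)). specialize (IH k). lra. }
  assert (chain' : forall k k', (k <= k')%nat -> lam m a b (pn k) <= lam m a b (pn k')).
  { intros k k' Hk. replace k' with (k + (k' - k))%nat by lia. apply chain. }
  assert (lamper : forall i, sm m a b (pn i) (pn (i + P)%nat) -> lam m a b (pn (i + P)%nat) = lam m a b (pn i)).
  { intros i Hs. unfold lam. rewrite (mn_sm m a b (pn (i+P)%nat) (pn i)), (sp_sm m a b (pn (i+P)%nat) (pn i)); auto;
    apply sm_sym; auto. }
  assert (desc : forall i, sm m a b (pn (S i)) (pn (S i + P)%nat) -> sm m a b (pn i) (pn (i + P)%nat)).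
  { intros i Hs. set (n := (i + P)%nat).
    assert (HSn : pn (S i + P)%nat = T m a b (pn n)) by reflexivity.
    pose proof (lamper (S i) Hs) as Lp. rewrite HSn in Lp.
    pose proof (chain' (S i) n ltac:(unfold n; lia)) as Lc.
    destruct (lam_eq m a b (pn n) hl (Xpn n) ltac:(lra)) as [E1 E2].
    set (t' := T m a b (pn n)) in *.
    assert (Xt' : X t') by (apply T_X; auto).
    destruct (mn_spec m a b t' hl Xt') as [_ Mt'].
    destruct (sp_spec m a b t' hl Xt') as [Ut' _].
    assert (C1 : mn m a b t' <= pn (S i)).
    { apply Mt'. split; auto. }
    assert (C2 : yn (S i) <= sp m a b t').
    { apply Ut'. split; auto. eapply sm_trans; eauto. }
    pose proof (gap (S i)).
    set (c := T m a b (mn m a b (pn n)) - mn m a b (pn n)).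
    set (bb := pn (S i) - c).
    assert (Cb : cls m a b (pn n) bb).
    { apply cls_interval; auto. unfold lam in Lp, Lc. unfold bb, c. rewrite E1. split; lra. }
    assert (Tb : T m a b bb = T m a b (pn i)).
    { rewrite <- pnS. pose proof (E2 bb Cb). fold c in H0. unfold bb in *. lra. }
    apply T_inj in Tb; auto; [|destruct Cb; auto].
    rewrite <- Tb. destruct Cb; auto. }
  assert (desc_all : forall i, sm m a b (pn i) (pn (i + P)%nat) -> sm m a b (pn 0%nat) (pn P)).
  { induction i as [|i IH]; intros Hs; auto. }
  pose proof (desc_all i0 Hs1) as S0.
  assert (lamdec : forall n, (n < P)%nat -> lam m a b (T m a b (pn n)) <= lam m a b (pn n)).
  { intros n Hn. rewrite <- pnS. pose proof (chain' (S n) P ltac:(lia)).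
    pose proof (lamper 0%nat S0). pose proof (chain' 0%nat n ltac:(lia)). simpl in *. lra. }
  assert (mnp : mn m a b p = p).
  { unfold p at 2. apply mn_sm; auto. }
  assert (mnfix : forall n, (n <= P)%nat -> mn m a b (pn n) = pn n).
  { induction n as [|n IH]; intros Hn; [exact mnp|].
    destruct (lam_eq m a b (pn n) hl (Xpn n) (lamdec n ltac:(lia))) as [E1 _].
    rewrite pnS, <- E1, IH by lia. reflexivity. }
  assert (Hper : pn P = p).
  { rewrite <- (mnfix P ltac:(lia)). rewrite (mn_sm m a b (pn P) (pn 0%nat)); auto.
    apply sm_sym; auto. }
  assert (Hmin : forall n s, (n <= P)%nat -> cls m a b (pn n) s -> pn n <= s).
  { intros n s Hn Hs. rewrite <- (mnfix n Hn). destruct (mn_spec m a b (pn n) hl (Xpn n)) as [_ M].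
    apply M; auto. }
  (* some orbit point is a discontinuity *)
  assert (HD : exists n, (n < P)%nat /\ ~ notD m a b (pn n)).
  { apply NNPP. intros Hno.
    assert (Hall : forall n, (n < P)%nat -> notD m a b (pn n)).
    { intros n Hn. apply NNPP. intros Hc. apply Hno. eauto. }
    destruct (finite_eps P (fun n e => forall s, pn n - e < s <= pn n -> X s /\ T m a b s - s = T m a b (pn n) - pn n))
      as [e [He He2]].
    { intros n e e' Hq He' s Hs. apply Hq. lra. }
    { intros n Hn. apply LC; auto. }
    set (s := p - e / 2).
    assert (c1 : forall k, (k <= P)%nat -> It m a b k s = s + (pn k - p)).
    { induction k as [|k IH]; intros Hk. - simpl. unfold pn; simpl. lra.
      - rewrite It_S, IH by lia. destruct (He2 k ltac:(lia) (s + (pn k - p))) as [_ E].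
        { unfold s. lra. }
        rewrite pnS. lra. }
    assert (c2 : forall k, (k < P)%nat -> chiB m a b (It m a b k s) = chiB m a b (pn k)).
    { intros k Hk. rewrite c1 by lia. destruct (He2 k Hk (s + (pn k - p))) as [Xs E].
      { unfold s. lra. }
      apply chi_disp; auto. }
    assert (c3 : It m a b P s = s) by (rewrite c1, Hper by lia; lra).
    assert (c4 : forall k, chiB m a b (It m a b k s) = chiB m a b (It m a b k p)).
    { intros k. induction k as [k IH] using (well_founded_induction Wf_nat.lt_wf).
      destruct (Nat.lt_ge_cases k P) as [Hk|Hk].
      - apply c2; auto.
      - replace k with ((k - P) + P)%nat by lia. rewrite !It_add, c3.
        change (It m a b P p) with (pn P). rewrite Hper. apply IH. lia. }
    destruct (He2 0%nat ltac:(lia) s) as [Xs _]. { unfold s; simpl; unfold pn; simpl. lra. }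
    assert (Cs : cls m a b (pn 0%nat) s) by (split; auto).
    pose proof (Hmin 0%nat s ltac:(lia) Cs). unfold s in H; simpl in H. unfold pn in H; simpl in H. lra. }
  destruct HD as [n [Hn HnD]].
  exists (pn n), P, (P - n)%nat. split; [|split; [auto|split]].
  - unfold notD in HnD. apply not_all_ex_not in HnD. destruct HnD as [i Hi].
    exists i. apply imply_to_and in Hi. destruct Hi as [Hi1 Hi2]. split; auto.
    apply not_and_or in Hi2. destruct Hi2 as [Q|Q]; apply NNPP in Q; auto.
  - unfold pn. rewrite <- It_add. replace (P + n)%nat with (n + P)%nat by lia. rewrite It_add.
    change (It m a b P p) with (pn P). rewrite Hper. reflexivity.
  - unfold pn. rewrite <- It_add. replace (P - n + n)%nat with P by lia.
    change (It m a b P p) with (pn P). rewrite Hper. symmetry. apply H_sm. auto.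
Qed.

Lemma list_exists m a b (ds : list R) : exists L, forall d, In d ds -> forall P, (P >= 1)%nat ->
  It m a b P d = d -> forall k, In (H m a b (It m a b k d)) L.
Proof.
  induction ds as [|d0 ds IH].
  - exists nil. intros d Hd; destruct Hd.
  - destruct IH as [L' HL'].
    destruct (classic (exists P, (P >= 1)%nat /\ It m a b P d0 = d0)) as [[P0 [HP0 HP0']]|Hno].
    + exists (map (fun k => H m a b (It m a b k d0)) (seq 0 P0) ++ L').
      intros d [<-|Hd] P HP HPd k.
      * apply in_or_app; left. rewrite (It_mod m a b P0 d0 HP0 HP0' k). apply (in_map (fun k => H m a b (It m a b k d0))).
        apply in_seq. split; [lia|]. simpl. apply Nat.mod_upper_bound. lia.
      * apply in_or_app; right. eapply HL'; eauto.
    + exists L'. intros d [<-|Hd] P HP HPd k.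
      * exfalso; apply Hno; eauto.
      * eapply HL'; eauto.
Qed.

Theorem corollary4 (m : nat) (a b : nat -> R) (hl : length_vector m a b) :
  (forall x y, 0 <= x -> x <= y -> y < 1 -> H m a b x <= H m a b y) /\
  (exists L : list R, forall z, 0 <= z < 1 ->
     pos_length_interval (level_set m a b z) -> In z L).
Proof.
  split.
  - intros x y H0 H1 H2. apply H_mono; auto; unfold X; split; lra.
  - set (Dl := map (leftA a) (seq 0 m) ++ map (leftB m a b) (seq 0 m)).
    destruct (list_exists m a b Dl) as [L HL]. exists L.
    intros z _ [Hconv [x [y [[Xx Hx] [[Xy Hy] Hxy]]]]].
    set (t := (x + y) / 2).
    assert (St : level_set m a b z t) by (apply (Hconv x y t); auto; unfold t; split; lra).
    destruct St as [Xt Ht].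
    assert (Hpl : exists u v, X u /\ X v /\ u < v /\ sm m a b u v /\ H m a b u = z).
    { destruct (mid_sm m a b x t y hl Xx Xy ltac:(unfold t; split; lra) ltac:(congruence) ltac:(congruence))
        as [S1|S1].
      - exists x, t. repeat split; auto; unfold t; lra.
      - exists t, y. repeat split; auto; unfold t; lra. }
    destruct Hpl as [u [v [Xu [Xv [Huv [Suv Hu]]]]]].
    destruct (plateau_main m a b u v hl Xu Xv Huv Suv) as [d [P [k [[i [Hi Hd]] [HP [HPd Hk]]]]]].
    rewrite <- Hu, Hk. eapply (HL d); eauto.
    unfold Dl. apply in_or_app. destruct Hd as [->| ->]; [left|right]; apply in_map; apply in_seq; lia.
Qed.
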